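(* Let $N\in\mathbb N$, $F=\mathbb Z/N\mathbb Z$, and let $\sigma\in G_F$ have at most four blocks, i.e. $|\{f\in F:\sigma_f\neq\sigma_{f+1}\}|\le 4$. Then $D_{\rm stab}(\sigma)=D_{\rm sym}(\sigma)$.
   Context: $G_F=\{-1,1\}^F$, $A_F(\sigma)_f=\sum_{\ell\in F}\sigma_\ell\sigma_{\ell+f}$, $D_{\rm stab}(\sigma)=|\{\tau\in G_F: A_F(\tau)=A_F(\sigma)\}|$. The group $\mathcal S_F=\{-1,1\}\times(F\rtimes\{-1,1\})$ acts on $G_F$ by $\Phi_{(s,t,r)}(\sigma)_f=s\,\sigma_{rf+t}$ ($s,r\in\{-1,1\}$, $t\in F$), and $D_{\rm sym}(\sigma)$ is the cardinality of the orbit of $\sigma$ under this action. *)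

(* Defs.v *)
From mathcomp Require Import all_boot all_order all_algebra.
Set Implicit Arguments. Unset Strict Implicit. Unset Printing Implicit Defensive.
Import GRing.Theory.

(* F = Z/NZ with N = n.+1 >= 1, realized as the cyclic group 'I_N
   (canonical zmodType structure of 'I_n.+1: addition and opposite mod N). *)

(* An element of G_F = {-1,1}^F is encoded as a boolean function:
   true <-> -1, false <-> +1. *)
Definition pm (b : bool) : int := if b then (-1)%R else 1%R.

Section Defs.
Variable n : nat.
Local Notation F := 'I_n.+1.
Local Notation GF := {ffun F -> bool}.

Definition oneF : F := inZp 1.

Definition autocorr (s : GF) (f : F) : int :=
  (\sum_(l : F) pm (s l) * pm (s (l + f)%R))%R.

Definition Dstab (s : GF) : nat :=
  #|[set t : GF | [forall f, autocorr t f == autocorr s f]]|.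

(* Action of (s,t,r) in {-1,1} x (F x| {-1,1}):
   Phi_(s,t,r)(sigma)_f = s * sigma_(r f + t).
   s = -1 <-> sb = true (flips the sign); r = -1 <-> rb = true (f |-> -f). *)
Definition Phi (sb : bool) (t : F) (rb : bool) (sg : GF) : GF :=
  [ffun f : F => sb (+) sg ((if rb then - f else f) + t)%R].

Definition Dsym (sg : GF) : nat :=
  #|[set Phi p.1.1 p.1.2 p.2 sg | p : bool * F * bool]|.

Definition nblocks (sg : GF) : nat :=
  #|[set f : F | sg f != sg (f + oneF)%R]|.
End Defs.

(* Main.v *)
Require Import Defs.
From mathcomp Require Import all_boot all_order all_algebra.
From mathcomp Require Import zify ring lra.
Set Implicit Arguments. Unset Strict Implicit. Unset Printing Implicit Defensive.
Import GRing.Theory Num.Theory.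

Lemma perm_head (T : eqType) (x : T) t l1 l2 :
  perm_eq (x :: t) (l1 ++ x :: l2) -> perm_eq t (l1 ++ l2).
Proof.
move=> h; rewrite -(perm_cons x); apply: (perm_trans h).
by rewrite -cat1s perm_catCA.
Qed.

Lemma perm1 (x a : nat) : perm_eq [:: x] [:: a] -> x = a.
Proof. by move/perm_mem/(_ x); rewrite !inE eqxx => /esym/eqP. Qed.

Lemma perm2 (x y a b : nat) : perm_eq [:: x; y] [:: a; b] ->
  (x = a /\ y = b) \/ (x = b /\ y = a).
Proof.
move=> h; have := perm_mem h x; rewrite !inE eqxx /= => /esym.
case/orP => /eqP ex; subst x.
  by left; split => //; apply: perm1 (perm_head (l1 := [::]) h).
by right; split => //; apply: perm1 (perm_head (l1 := [:: a]) h).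
Qed.

Lemma perm3 (x y z a b c : nat) : perm_eq [:: x; y; z] [:: a; b; c] ->
  (x = a /\ y = b /\ z = c) \/ (x = a /\ y = c /\ z = b) \/
  (x = b /\ y = a /\ z = c) \/ (x = b /\ y = c /\ z = a) \/
  (x = c /\ y = a /\ z = b) \/ (x = c /\ y = b /\ z = a).
Proof.
move=> h; have := perm_mem h x; rewrite !inE eqxx /= => /esym.
case/orP => [/eqP ex|/orP [] /eqP ex]; subst x.
- case: (perm2 (perm_head (l1 := [::]) h)) => [[-> ->]|[-> ->]]; lia.
- case: (perm2 (perm_head (l1 := [:: a]) h)) => [[-> ->]|[-> ->]]; lia.
- case: (perm2 (perm_head (l1 := [:: a; b]) h)) => [[-> ->]|[-> ->]]; lia.
Qed.

Ltac pick := lazymatch goal with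
  | |- _ \/ _ => first [ by left; repeat split; lia | right; pick ]
  | _ => by repeat split; lia
  end.

Lemma dihedral4 (g1 g2 g3 g4 h1 h2 h3 h4 : nat) :
  perm_eq [:: h1; h2; h3; h4] [:: g1; g2; g3; g4] ->
  (h1 + h3 = g1 + g3 \/ h1 + h3 = g2 + g4) ->
  (h1 + h2 + h3 + h4 = g1 + g2 + g3 + g4) ->
  (h1 = g1 /\ h2 = g2 /\ h3 = g3 /\ h4 = g4) \/
  (h1 = g2 /\ h2 = g3 /\ h3 = g4 /\ h4 = g1) \/
  (h1 = g3 /\ h2 = g4 /\ h3 = g1 /\ h4 = g2) \/
  (h1 = g4 /\ h2 = g1 /\ h3 = g2 /\ h4 = g3) \/
  (h1 = g3 /\ h2 = g2 /\ h3 = g1 /\ h4 = g4) \/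
  (h1 = g2 /\ h2 = g1 /\ h3 = g4 /\ h4 = g3) \/
  (h1 = g1 /\ h2 = g4 /\ h3 = g3 /\ h4 = g2) \/
  (h1 = g4 /\ h2 = g3 /\ h3 = g2 /\ h4 = g1).
Proof.
move=> h hp hs; have := perm_mem h h1; rewrite !inE eqxx /= => /esym.
case/orP => [/eqP ex|/orP [/eqP ex|/orP [] /eqP ex]]; subst h1.
- case: (perm3 (perm_head (l1 := [::]) h)) => [|[|[|[|[|]]]]] [? [? ?]]; subst; clear h; case: hp => hp; pick.
- case: (perm3 (perm_head (l1 := [:: g1]) h)) => [|[|[|[|[|]]]]] [? [? ?]]; subst; clear h; case: hp => hp; pick.
- case: (perm3 (perm_head (l1 := [:: g1; g2]) h)) => [|[|[|[|[|]]]]] [? [? ?]]; subst; clear h; case: hp => hp; pick.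
- case: (perm3 (perm_head (l1 := [:: g1; g2; g3]) h)) => [|[|[|[|[|]]]]] [? [? ?]]; subst; clear h; case: hp => hp; pick.
Qed.

Local Open Scope ring_scope.

Definition pprod (s : seq nat) : {poly int} := \prod_(g <- s) (1 - 'X^g).

Lemma pprod_coef0 s : all (fun g => 0 < g)%N s -> (pprod s)`_0 = 1.
Proof.
elim: s => [|g s IH] /=; first by rewrite /pprod big_nil coef1.
case/andP=> g0 hs; rewrite /pprod big_cons -/(pprod s) mulrBl mul1r coefB coefXnM.
by rewrite g0 IH // subr0.
Qed.

Lemma pprod_coefm m s : (0 < m)%N -> all (fun g => m <= g)%N s ->
  (pprod s)`_m = - (count_mem m s)%:R.
Proof.
move=> m0; elim: s => [|g s IH] /=; first by rewrite /pprod big_nil coef1; case: m m0.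
case/andP=> gm hs; rewrite /pprod big_cons -/(pprod s) mulrBl mul1r coefB coefXnM.
rewrite IH //; case: ltngtP gm => // [hg|<-] _.
  by rewrite add0n subr0.
rewrite subnn pprod_coef0 ?add1n ?mulrS ?opprD; last first.
  by apply/allP=> x xs; apply: leq_trans m0 _; exact: (allP hs).
by rewrite addrC.
Qed.

Lemma pprod_uniq k s t : (size s + size t <= k)%N ->
  all (fun g => 0 < g)%N s -> all (fun g => 0 < g)%N t ->
  pprod s = pprod t -> perm_eq s t.
Proof.
elim: k s t => [|k IH] s t.
  by case: s; case: t.
move=> hk hs ht e.
case: (boolP (nilp (s ++ t))).
  by rewrite /nilp size_cat addn_eq0 => /andP[/nilP -> /nilP ->].
move=> ne.
have ex : exists x, x \in s ++ t.
  by case: (s ++ t) ne => // x r _; exists x; rewrite inE eqxx.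
pose m := ex_minn ex.
have [mst mmin] : m \in s ++ t /\ forall x, x \in s ++ t -> (m <= x)%N.
  by rewrite /m; case: ex_minnP => y H1 H2; split.
have m0 : (0 < m)%N.
  by move: mst; rewrite mem_cat => /orP[/(allP hs)|/(allP ht)].
have cs : all (fun g => m <= g)%N s.
  by apply/allP=> x xs; apply: mmin; rewrite mem_cat xs.
have ct : all (fun g => m <= g)%N t.
  by apply/allP=> x xs; apply: mmin; rewrite mem_cat xs orbT.
have ecount : count_mem m s = count_mem m t.
  have := congr1 (fun p : {poly int} => p`_m) e => /=.
  rewrite !pprod_coefm // => /eqP; rewrite eqr_opp eqr_nat => /eqP //.
have [ms mt] : m \in s /\ m \in t.
  move: mst; rewrite mem_cat -!has_pred1 !has_count ecount.
  by rewrite orbb => h; split.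
have ps := perm_to_rem ms; have pt := perm_to_rem mt.
have ers : pprod s = (1 - 'X^m) * pprod (rem m s).
  by rewrite /pprod (perm_big _ ps) big_cons.
have ert : pprod t = (1 - 'X^m) * pprod (rem m t).
  by rewrite /pprod (perm_big _ pt) big_cons.
have nz : (1 - 'X^m : {poly int}) != 0.
  apply/eqP=> h; have := congr1 (fun p : {poly int} => p`_0) h.
  by rewrite coefB coef1 coefXn eqxx coef0 eq_sym (gtn_eqF m0) subr0.
have er : pprod (rem m s) = pprod (rem m t).
  by apply: (mulfI nz); rewrite -ers -ert.
have : perm_eq (rem m s) (rem m t).
  apply: IH er.
  - move: hk; rewrite (perm_size ps) (perm_size pt) /=; lia.
  - by apply/allP=> x /mem_rem /(allP hs).
  - by apply/allP=> x /mem_rem /(allP ht).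
move=> h; apply: (perm_trans ps); rewrite perm_sym; apply: (perm_trans pt); rewrite perm_sym.
by rewrite perm_cons.
Qed.

Section S.
Variable n : nat.
Local Notation N := n.+1.
Local Notation F := 'I_n.+1.
Local Notation GF := {ffun F -> bool}.

Lemma inZpD (i j : nat) : inZp i + inZp j = inZp (i + j) :> F.
Proof. by apply: val_inj; rewrite /= modnDm. Qed.

Lemma inZpN (i : nat) : inZp (i + N) = inZp i :> F.
Proof. by apply: val_inj; rewrite /= modnDr. Qed.

Lemma inZp0 : inZp 0 = 0 :> F.
Proof. by apply: val_inj; rewrite /= mod0n. Qed.

Lemma inZpS (i : nat) : inZp i + oneF n = inZp i.+1 :> F.
Proof. by rewrite /oneF inZpD addn1. Qed.

Lemma inZpB (d c : nat) : (c < N)%N -> inZp d - inZp c = inZp (d + (N - c)) :> F.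
Proof.
move=> cN; apply/eqP; rewrite subr_eq inZpD.
have -> : (d + (N - c) + c = d + N)%N by lia.
by rewrite inZpN.
Qed.

Definition w (s : GF) (i : nat) := s (inZp i).
Definition chg (s : GF) (i : nat) := w s i != w s i.+1.
Definition chgF (s : GF) (f : F) := s f != s (f + oneF n).

Lemma chgFE s i : chgF s (inZp i) = chg s i.
Proof. by rewrite /chgF /chg /w inZpS. Qed.

Lemma w_formula s i : w s i = w s 0 (+) odd (count (chg s) (iota 0 i)).
Proof.
elim: i => [|i IH]; first by rewrite /= addbF.
rewrite -addn1 iotaD count_cat /= add0n addn0 oddD addbA -IH addn1.
rewrite /chg; case: (w s i); case: (w s i.+1); reflexivity.
Qed.

Lemma chg_ext (u v : GF) : (forall f, chgF u f = chgF v f) -> u 0 = v 0 -> u = v.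
Proof.
move=> hc h0; apply/ffunP=> f.
have e : f = inZp f by rewrite valZpK.
rewrite e; change (w u f = w v f).
rewrite (w_formula u) (w_formula v) /w inZp0 h0; congr (_ (+) odd _).
by apply: eq_count => i; rewrite -!chgFE.
Qed.

Lemma nblocksE s : nblocks s = count (chg s) (iota 0 N).
Proof.
rewrite /nblocks -sum1_card -sum1_count.
have -> : iota 0 N = index_iota 0 N by rewrite /index_iota subn0.
rewrite big_mkord; apply: eq_bigl => i; rewrite inE -chgFE valZpK.
by [].
Qed.

End S.

Lemma pmX a b : pm (a (+) b) = pm a * pm b.
Proof. by case: a; case: b; rewrite /pm /= ?mulN1r ?mul1r ?opprK. Qed.

Lemma pm2 a : pm a * pm a = 1.
Proof. by case: a; rewrite /pm ?mulN1r ?opprK ?mul1r. Qed.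

Section S.
Variable n : nat.
Local Notation N := n.+1.
Local Notation F := 'I_n.+1.
Local Notation GF := {ffun F -> bool}.

Lemma autocorr_Phi sb t rb (s : GF) f : autocorr (Phi sb t rb s) f = autocorr s f.
Proof.
rewrite /autocorr /Phi.
under eq_bigr => l _ do rewrite !ffunE !pmX mulrACA pm2 mul1r.
case: rb.
  rewrite (reindex_inj (h := fun l => - l - f + t)); last first.
    by move=> x y /= /addIr /addIr /oppr_inj.
  apply: eq_bigr => l _; rewrite mulrC; congr (pm (s _) * pm (s _)).
    by rewrite addrAC subrK opprD opprK subrK.
  by rewrite opprD subrK opprD !opprK.
rewrite (reindex_inj (addIr (- t))); apply: eq_bigr => l _.
by rewrite subrK addrAC subrK.
Qed.

Lemma sum_chgF (s : GF) : \sum_(l : F) ((chgF s l)%:R : int) = (nblocks s)%:R.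
Proof.
rewrite /nblocks -sum1_card natr_sum [RHS]big_mkcond /=; apply: eq_bigr => l _.
by rewrite inE /chgF; case: (_ != _).
Qed.

Lemma autocorr1 (s : GF) : autocorr s (oneF n) = N%:R - 2 * (nblocks s)%:R.
Proof.
rewrite -sum_chgF /autocorr.
have -> : (N%:R : int) = \sum_(l : F) 1 by rewrite sumr_const card_ord.
rewrite mulr_sumr -sumrB; apply: eq_bigr => l _; rewrite /chgF.
by case: (s l); case: (s (l + oneF n)).
Qed.

Lemma sum_autocorr (s : GF) : \sum_f autocorr s f = (\sum_l pm (s l)) ^+ 2.
Proof.
rewrite /autocorr exchange_big expr2 mulr_suml; apply: eq_bigr => l _.
rewrite -mulr_sumr; congr (_ * _).
by rewrite [RHS](reindex_inj (addrI l)).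
Qed.

Lemma nblocks_even (s : GF) : ~~ odd (nblocks s).
Proof.
have e : inZp N = inZp 0 :> F by rewrite -[in LHS](add0n N) inZpN.
have := w_formula s N.
rewrite {1}/w e -/(w s 0) nblocksE.
by case: (odd _); case: (w s 0).
Qed.

Definition Rf (s : GF) (f : F) : int :=
  \sum_(l : F) (if chgF s l && chgF s (l + f) then pm (s l) * pm (s (l + f)) else 0).

Lemma Rf_autocorr (s : GF) f :
  4 * Rf s f = 2 * autocorr s f - autocorr s (f + oneF n) - autocorr s (f - oneF n).
Proof.
set o := oneF n.
have e1 : autocorr s f = \sum_(l : F) pm (s (l + o)) * pm (s (l + o + f)).
  by rewrite /autocorr (reindex_inj (addIr o)).
have e2 : autocorr s (f - o) = \sum_(l : F) pm (s (l + o)) * pm (s (l + f)).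
  rewrite /autocorr (reindex_inj (addIr o)); apply: eq_bigr => l _.
  by rewrite -addrA [o + _]addrCA subrr addr0.
have -> : 2 * autocorr s f = autocorr s f + autocorr s f by ring.
rewrite {1}e1 e2 /autocorr /Rf mulr_sumr.
rewrite -big_split -sumrB -sumrB; apply: eq_bigr => l _ /=.
rewrite /chgF !addrA [l + f + o]addrAC.
by case: (s l); case: (s (l + o)); case: (s (l + f)); case: (s (l + o + f)).
Qed.

End S.

Section S.
Variable n : nat.
Local Notation N := n.+1.
Local Notation F := 'I_n.+1.
Local Notation GF := {ffun F -> bool}.

Definition cl (s : GF) := [seq i <- iota 0 N | chg s i].

Lemma size_cl s : size (cl s) = nblocks s.
Proof. by rewrite nblocksE size_filter. Qed.

Lemma cl_sorted s : sorted ltn (cl s).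
Proof. by apply: sorted_filter; [exact: ltn_trans | exact: iota_ltn_sorted]. Qed.

Lemma mem_cl s i : (i \in cl s) = (i < N)%N && chg s i.
Proof. by rewrite mem_filter mem_iota add0n andbC. Qed.

Lemma count_cl s i : (i <= N)%N ->
  count (chg s) (iota 0 i) = count (fun j => j < i)%N (cl s).
Proof.
move=> iN; rewrite /cl -(subnKC iN) iotaD filter_cat count_cat add0n.
have -> : count (fun j => j < i)%N [seq j <- iota i (N - i) | chg s j] = 0%N.
  apply/eqP; rewrite -leqn0 leqNgt -has_count; apply/negP => /hasP [j].
  by rewrite mem_filter mem_iota => /andP [_ /andP [h _]]; rewrite ltnNge h.
rewrite addn0 count_filter; apply: eq_in_count => j.
by rewrite mem_iota add0n /= => ->.
Qed.

Lemma sum_chg (V : zmodType) s (G : F -> V) :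
  \sum_(l : F) (if chgF s l then G l else 0) = \sum_(i <- cl s) G (inZp i).
Proof.
rewrite big_filter.
have -> : iota 0 N = index_iota 0 N by rewrite /index_iota subn0.
rewrite big_mkord [RHS]big_mkcond; apply: eq_bigr => i _.
by rewrite -chgFE !valZpK.
Qed.

Definition Pp (s : GF) : {poly int} := \sum_(f : F | f != 0) (Rf s f)%:P * 'X^f.

Lemma Pp_expand s : Pp s = \sum_(i <- cl s) \sum_(j <- cl s)
   (if inZp j != inZp i :> F then (pm (w s i) * pm (w s j))%:P * 'X^(nat_of_ord (inZp j - inZp i : F)%R)
    else 0).
Proof.
rewrite -(sum_chg s (fun l => \sum_(j <- cl s) (if inZp j != l :> F then
   (pm (s l) * pm (w s j))%:P * 'X^(nat_of_ord (inZp j - l : F)%R) else 0))).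
under [RHS]eq_bigr => l _ do
  rewrite -(sum_chg s (fun g => if g != l :> F then
   (pm (s l) * pm (s g))%:P * 'X^(nat_of_ord (g - l : F)%R) else 0)).
rewrite /Pp /Rf.
have hs : forall (G : F -> int) (p : {poly int}), (\sum_l G l)%:P * p = \sum_l (G l)%:P * p.
  by move=> G p; rewrite (big_morph _ (@polyCD _) (polyC0 _)) mulr_suml.
rewrite (eq_bigr _ (fun f _ => hs _ _)).
rewrite exchange_big /=; apply: eq_bigr => l _.
case: (boolP (chgF s l)) => hl; last first.
  by rewrite big1 // => f _; rewrite /= rmorph0 mul0r.
rewrite (reindex_inj (addIr (- l))) /= big_mkcond; apply: eq_bigr => g _.
rewrite subr_eq0 [l + _]addrC subrK.
by case: (g == l); case: (chgF s g); rewrite /= ?rmorph0 ?mul0r.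
Qed.

Lemma Rf_eq (s t : GF) : (forall f, autocorr t f = autocorr s f) ->
  forall f, Rf t f = Rf s f.
Proof.
move=> h f; apply: (@mulfI _ 4) => //.
by rewrite !Rf_autocorr !h.
Qed.

Lemma Pp_eq (s t : GF) : (forall f, autocorr t f = autocorr s f) -> Pp t = Pp s.
Proof. by move=> h; apply: eq_bigr => f _; rewrite (Rf_eq h). Qed.

End S.

Lemma bF (b : bool) : (b -> False) -> b = false.
Proof. by case: b => // h; case: h. Qed.
Lemma bT (b : bool) : b -> b = true.
Proof. by case: b. Qed.

Section S.
Variable n : nat.
Local Notation N := n.+1.
Local Notation F := 'I_n.+1.
Local Notation GF := {ffun F -> bool}.

Lemma inZp_eqE i j : (i < N)%N -> (j < N)%N -> (inZp j == inZp i :> F) = (j == i).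
Proof.
by move=> hi hj; rewrite -val_eqE /= !modn_small.
Qed.

Lemma val_inZpB i j : (i < N)%N -> (j < N)%N ->
  nat_of_ord (inZp j - inZp i : F) = if (i <= j)%N then (j - i)%N else (j + N - i)%N.
Proof.
move=> hi hj; rewrite inZpB //=; case: leqP => hij.
  have -> : (j + (N - i) = (j - i) + N)%N by lia.
  by rewrite modnDr modn_small //; lia.
by rewrite modn_small; lia.
Qed.

Lemma w_cl (s : GF) i : (i <= N)%N -> w s i = w s 0 (+) odd (count (fun j => j < i)%N (cl s)).
Proof. by move=> hi; rewrite {1}w_formula count_cl. Qed.

Lemma cl_facts (s : GF) l : cl s = l -> sorted ltn l /\ all (fun i => i < N)%N l.
Proof.
move=> <-; split; first exact: cl_sorted.
by apply/allP => i; rewrite mem_cl => /andP [].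
Qed.

Lemma Pp4 (s : GF) c1 c2 c3 c4 : cl s = [:: c1; c2; c3; c4] ->
  Pp s + 1 + 'X^((c2 - c1) + (c3 - c2) + (c4 - c3) + (N - c4 + c1))%N
   + 'X^((c2 - c1) + (c4 - c3))%N + 'X^((c3 - c2) + (N - c4 + c1))%N
  = pprod [:: (c2 - c1)%N; (c3 - c2)%N; (c4 - c3)%N; (N - c4 + c1)%N].
Proof.
move=> E; have [so al] := cl_facts E.
move: so al => /= /and4P [h12 h23 h34 _] /and5P [h1 h2 h3 h4 _].
have lt11 : (c1 < c1)%N = false by apply: bF => ?; lia.
have lt12 : (c1 < c2)%N = true by apply: bT; lia.
have le12 : (c1 <= c2)%N = true by apply: bT; lia.
have eq12 : (c1 == c2) = false by apply: bF => /eqP ?; lia.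
have lt13 : (c1 < c3)%N = true by apply: bT; lia.
have le13 : (c1 <= c3)%N = true by apply: bT; lia.
have eq13 : (c1 == c3) = false by apply: bF => /eqP ?; lia.
have lt14 : (c1 < c4)%N = true by apply: bT; lia.
have le14 : (c1 <= c4)%N = true by apply: bT; lia.
have eq14 : (c1 == c4) = false by apply: bF => /eqP ?; lia.
have lt21 : (c2 < c1)%N = false by apply: bF => ?; lia.
have le21 : (c2 <= c1)%N = false by apply: bF => ?; lia.
have eq21 : (c2 == c1) = false by apply: bF => /eqP ?; lia.
have lt22 : (c2 < c2)%N = false by apply: bF => ?; lia.
have lt23 : (c2 < c3)%N = true by apply: bT; lia.
have le23 : (c2 <= c3)%N = true by apply: bT; lia.
have eq23 : (c2 == c3) = false by apply: bF => /eqP ?; lia.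
have lt24 : (c2 < c4)%N = true by apply: bT; lia.
have le24 : (c2 <= c4)%N = true by apply: bT; lia.
have eq24 : (c2 == c4) = false by apply: bF => /eqP ?; lia.
have lt31 : (c3 < c1)%N = false by apply: bF => ?; lia.
have le31 : (c3 <= c1)%N = false by apply: bF => ?; lia.
have eq31 : (c3 == c1) = false by apply: bF => /eqP ?; lia.
have lt32 : (c3 < c2)%N = false by apply: bF => ?; lia.
have le32 : (c3 <= c2)%N = false by apply: bF => ?; lia.
have eq32 : (c3 == c2) = false by apply: bF => /eqP ?; lia.
have lt33 : (c3 < c3)%N = false by apply: bF => ?; lia.
have lt34 : (c3 < c4)%N = true by apply: bT; lia.
have le34 : (c3 <= c4)%N = true by apply: bT; lia.
have eq34 : (c3 == c4) = false by apply: bF => /eqP ?; lia.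
have lt41 : (c4 < c1)%N = false by apply: bF => ?; lia.
have le41 : (c4 <= c1)%N = false by apply: bF => ?; lia.
have eq41 : (c4 == c1) = false by apply: bF => /eqP ?; lia.
have lt42 : (c4 < c2)%N = false by apply: bF => ?; lia.
have le42 : (c4 <= c2)%N = false by apply: bF => ?; lia.
have eq42 : (c4 == c2) = false by apply: bF => /eqP ?; lia.
have lt43 : (c4 < c3)%N = false by apply: bF => ?; lia.
have le43 : (c4 <= c3)%N = false by apply: bF => ?; lia.
have eq43 : (c4 == c3) = false by apply: bF => /eqP ?; lia.
have lt44 : (c4 < c4)%N = false by apply: bF => ?; lia.
have w1 : w s c1 = w s 0 (+) false.
  by rewrite w_cl ?E ?(ltnW h1) //= !lt11 !lt21 !lt31 !lt41.
have w2 : w s c2 = w s 0 (+) true.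
  by rewrite w_cl ?E ?(ltnW h2) //= !lt12 !lt22 !lt32 !lt42.
have w3 : w s c3 = w s 0 (+) false.
  by rewrite w_cl ?E ?(ltnW h3) //= !lt13 !lt23 !lt33 !lt43.
have w4 : w s c4 = w s 0 (+) true.
  by rewrite w_cl ?E ?(ltnW h4) //= !lt14 !lt24 !lt34 !lt44.
rewrite Pp_expand E !big_cons !big_nil !val_inZpB // !leqnn.
rewrite ?le12 ?le13 ?le14 ?le21 ?le23 ?le24 ?le31 ?le32 ?le34 ?le41 ?le42 ?le43.
rewrite !inZp_eqE // !eqxx.
rewrite ?eq12 ?eq13 ?eq14 ?eq21 ?eq23 ?eq24 ?eq31 ?eq32 ?eq34 ?eq41 ?eq42 ?eq43 /=.
rewrite w1 w2 w3 w4 !pmX.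
have [a1 ea1] : exists a, a = (c2 - c1)%N by exists (c2 - c1)%N.
have [a2 ea2] : exists a, a = (c3 - c2)%N by exists (c3 - c2)%N.
have [a3 ea3] : exists a, a = (c4 - c3)%N by exists (c4 - c3)%N.
have [a4 ea4] : exists a, a = (N - c4 + c1)%N by exists (N - c4 + c1)%N.
have -> : (c2 - c1)%N = (a1)%N by lia.
have -> : (c3 - c1)%N = (a1 + a2)%N by lia.
have -> : (c4 - c1)%N = (a1 + a2 + a3)%N by lia.
have -> : (c1 + N - c2)%N = (a2 + a3 + a4)%N by lia.
have -> : (c3 - c2)%N = (a2)%N by lia.
have -> : (c4 - c2)%N = (a2 + a3)%N by lia.
have -> : (c1 + N - c3)%N = (a3 + a4)%N by lia.
have -> : (c2 + N - c3)%N = (a3 + a4 + a1)%N by lia.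
have -> : (c4 - c3)%N = (a3)%N by lia.
have -> : (c1 + N - c4)%N = (a4)%N by lia.
have -> : (c2 + N - c4)%N = (a4 + a1)%N by lia.
have -> : (c3 + N - c4)%N = (a4 + a1 + a2)%N by lia.
rewrite -ea4.
rewrite /pprod !big_cons big_nil !exprD.
case: (w s 0); rewrite /pm /= !polyCM ?polyCN ?polyC1; ring.
Qed.

Lemma Pp2 (s : GF) c1 c2 : cl s = [:: c1; c2] ->
  Pp s + 1 + 'X^((c2 - c1) + (N - c2 + c1))%N
  = pprod [:: (c2 - c1)%N; (N - c2 + c1)%N].
Proof.
move=> E; have [so al] := cl_facts E.
move: so al => /= /andP [h12 _] /and3P [h1 h2 _].
have lt11 : (c1 < c1)%N = false by apply: bF => ?; lia.
have lt12 : (c1 < c2)%N = true by apply: bT; lia.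
have le12 : (c1 <= c2)%N = true by apply: bT; lia.
have eq12 : (c1 == c2) = false by apply: bF => /eqP ?; lia.
have lt21 : (c2 < c1)%N = false by apply: bF => ?; lia.
have le21 : (c2 <= c1)%N = false by apply: bF => ?; lia.
have eq21 : (c2 == c1) = false by apply: bF => /eqP ?; lia.
have lt22 : (c2 < c2)%N = false by apply: bF => ?; lia.
have w1 : w s c1 = w s 0 (+) false.
  by rewrite w_cl ?E ?(ltnW h1) //= !lt11 !lt21.
have w2 : w s c2 = w s 0 (+) true.
  by rewrite w_cl ?E ?(ltnW h2) //= !lt12 !lt22.
rewrite Pp_expand E !big_cons !big_nil !val_inZpB // !leqnn ?le12 ?le21.
rewrite !inZp_eqE // !eqxx ?eq12 ?eq21 /=.
rewrite w1 w2 !pmX.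
have [a1 ea1] : exists a, a = (c2 - c1)%N by exists (c2 - c1)%N.
have [a2 ea2] : exists a, a = (N - c2 + c1)%N by exists (N - c2 + c1)%N.
have -> : (c2 - c1)%N = a1 by lia.
have -> : (c1 + N - c2)%N = a2 by lia.
rewrite -ea2.
rewrite /pprod !big_cons big_nil !exprD.
case: (w s 0); rewrite /pm /= !polyCM ?polyCN ?polyC1; ring.
Qed.

End S.

Lemma sum_range (G : nat -> int) a b c : (a <= b)%N ->
  (forall i, (a <= i < b)%N -> G i = c) -> \sum_(a <= i < b) G i = c * (b - a)%:Z.
Proof.
move=> ab h; rewrite -natz mulr_natr -sumr_const_nat.
by apply: eq_big_nat => i /h.
Qed.

Section S.
Variable n : nat.
Local Notation N := n.+1.
Local Notation F := 'I_n.+1.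
Local Notation GF := {ffun F -> bool}.

Lemma sum_pm_nat (s : GF) : \sum_(l : F) pm (s l) = \sum_(0 <= i < N) pm (w s i).
Proof.
rewrite big_mkord; apply: eq_bigr => i _; by rewrite /w valZpK.
Qed.

Lemma sum4 (s : GF) c1 c2 c3 c4 : cl s = [:: c1; c2; c3; c4] ->
  \sum_(l : F) pm (s l) = pm (w s 0) *
     (((c3 - c2) + (N - c4 + c1))%N%:Z - ((c2 - c1) + (c4 - c3))%N%:Z).
Proof.
move=> E; have [so al] := cl_facts E.
move: so al => /= /and4P [h12 h23 h34 _] /and5P [h1 h2 h3 h4 _].
have wi : forall i, (i <= N)%N -> w s i = w s 0 (+)
   odd ((c1 < i)%N + ((c2 < i)%N + ((c3 < i)%N + ((c4 < i)%N + 0%N)))).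
  by move=> i hi; rewrite w_cl // E.
have l12 : (c1.+1 <= c2.+1)%N by lia.
have l23 : (c2.+1 <= c3.+1)%N by lia.
have l34 : (c3.+1 <= c4.+1)%N by lia.
have l2N : (c2.+1 <= N)%N by lia.
have l3N : (c3.+1 <= N)%N by lia.
rewrite sum_pm_nat (big_cat_nat _ (n := c1.+1)) //=.
rewrite (big_cat_nat _ (n := c2.+1) (m := c1.+1)) //=.
rewrite (big_cat_nat _ (n := c3.+1) (m := c2.+1)) //=.
rewrite (big_cat_nat _ (n := c4.+1) (m := c3.+1)) //=.
rewrite (@sum_range _ 0 c1.+1 (pm (w s 0))); last first.
  move=> i hi; rewrite wi; last by lia.
  rewrite (@bF (c1 < i)%N); last by move=> ?; lia.
  rewrite (@bF (c2 < i)%N); last by move=> ?; lia.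
  rewrite (@bF (c3 < i)%N); last by move=> ?; lia.
  rewrite (@bF (c4 < i)%N); last by move=> ?; lia.
  by rewrite /= addbF.
  lia.
rewrite (@sum_range _ c1.+1 c2.+1 (- pm (w s 0))); last first.
  move=> i hi; rewrite wi; last by lia.
  rewrite (@bT (c1 < i)%N); last by lia.
  rewrite (@bF (c2 < i)%N); last by move=> ?; lia.
  rewrite (@bF (c3 < i)%N); last by move=> ?; lia.
  rewrite (@bF (c4 < i)%N); last by move=> ?; lia.
  by rewrite /= ?addbF // pmX /pm mulrN1.
  lia.
rewrite (@sum_range _ c2.+1 c3.+1 (pm (w s 0))); last first.
  move=> i hi; rewrite wi; last by lia.
  rewrite (@bT (c1 < i)%N); last by lia.
  rewrite (@bT (c2 < i)%N); last by lia.
  rewrite (@bF (c3 < i)%N); last by move=> ?; lia.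
  rewrite (@bF (c4 < i)%N); last by move=> ?; lia.
  by rewrite /= addbF.
  lia.
rewrite (@sum_range _ c3.+1 c4.+1 (- pm (w s 0))); last first.
  move=> i hi; rewrite wi; last by lia.
  rewrite (@bT (c1 < i)%N); last by lia.
  rewrite (@bT (c2 < i)%N); last by lia.
  rewrite (@bT (c3 < i)%N); last by lia.
  rewrite (@bF (c4 < i)%N); last by move=> ?; lia.
  by rewrite /= ?addbF // pmX /pm mulrN1.
  lia.
rewrite (@sum_range _ c4.+1 N (pm (w s 0))); last first.
  move=> i hi; rewrite wi; last by lia.
  rewrite (@bT (c1 < i)%N); last by lia.
  rewrite (@bT (c2 < i)%N); last by lia.
  rewrite (@bT (c3 < i)%N); last by lia.
  rewrite (@bT (c4 < i)%N); last by lia.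
  by rewrite /= addbF.
  lia.
have -> : (c1.+1 - 0)%N = c1.+1 by lia.
case: (w s 0); rewrite /pm /=; lia.
Qed.

End S.

Section S.
Variable n : nat.
Local Notation N := n.+1.
Local Notation F := 'I_n.+1.
Local Notation GF := {ffun F -> bool}.

Lemma mem_clF (s : GF) f : (f \in map inZp (cl s)) = chgF s f.
Proof.
apply/mapP/idP => [[i hi ->]|h].
  by move: hi; rewrite mem_cl chgFE => /andP [].
by exists (nat_of_ord f); rewrite ?valZpK // mem_cl ltn_ord -chgFE valZpK.
Qed.

Lemma orb_shift (s t : GF) (d : F) :
  perm_eq (map (fun x => x + d) (map inZp (cl s))) (map inZp (cl t)) ->
  exists p : bool * F * bool, t = Phi p.1.1 p.1.2 p.2 s.
Proof.
move=> hp; exists (t 0 (+) s (0 - d), - d, false) => /=.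
apply: chg_ext => [f|]; last by rewrite /Phi ffunE /= addbK.
rewrite /chgF /Phi !ffunE /=.
have -> : (t 0 (+) s (0 - d)) (+) s (f - d) != (t 0 (+) s (0 - d)) (+) s (f + oneF n - d)
   = chgF s (f - d).
  rewrite /chgF addrAC.
  by case: (t 0 (+) s (0 - d)); case: (s (f - d)); case: (s (f - d + oneF n)).
rewrite -[_ != _]/(chgF t f) -!mem_clF -(perm_mem hp).
have -> : f = (f - d) + d by rewrite subrK.
by rewrite (mem_map (addIr d)) subrK.
Qed.

Lemma orb_refl (s t : GF) (d : F) :
  perm_eq (map (fun x => d - x) (map inZp (cl s))) (map inZp (cl t)) ->
  exists p : bool * F * bool, t = Phi p.1.1 p.1.2 p.2 s.
Proof.
move=> hp; exists (t 0 (+) s (- 0 + (d + oneF n)), d + oneF n, true) => /=.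
apply: chg_ext => [f|]; last by rewrite /Phi ffunE /= addbK.
rewrite /chgF /Phi !ffunE /=.
set b := t 0 (+) _.
have -> : b (+) s (- f + (d + oneF n)) != b (+) s (- (f + oneF n) + (d + oneF n))
   = chgF s (d - f).
  have e1 : - f + (d + oneF n) = d - f + oneF n by rewrite addrC addrAC.
  have e2 : - (f + oneF n) + (d + oneF n) = d - f.
    by rewrite opprD addrACA addNr addr0 addrC.
  rewrite e1 e2 /chgF.
  by case: b; case: (s (d - f)); case: (s (d - f + oneF n)).
rewrite -[_ != _]/(chgF t f) -!mem_clF -(perm_mem hp).
have inj : injective (fun x : F => d - x).
  by move=> x y /= /addrI /oppr_inj.
have -> : f = d - (d - f) by rewrite opprB addrCA subrr addr0.
by rewrite (mem_map inj) opprB addrCA subrr addr0.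
Qed.

Lemma inZp_addE a d b :
  (a + d = b \/ a + d = b + N \/ a + d = b + N + N)%N -> inZp a + inZp d = inZp b :> F.
Proof. by rewrite inZpD => -[->|[->|->]]; rewrite ?inZpN. Qed.

Lemma inZp_subE a d b : (a < N)%N ->
  (d + (N - a) = b \/ d + (N - a) = b + N \/ d + (N - a) = b + N + N)%N ->
  inZp d - inZp a = inZp b :> F.
Proof. by move=> ha; rewrite inZpB // => -[->|[->|->]]; rewrite ?inZpN. Qed.

End S.

Section S.
Variable n : nat.
Local Notation N := n.+1.
Local Notation F := 'I_n.+1.
Local Notation GF := {ffun F -> bool}.

Lemma key (s t : GF) : (nblocks s <= 4)%N -> (forall f, autocorr t f = autocorr s f) ->
  exists p : bool * F * bool, t = Phi p.1.1 p.1.2 p.2 s.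
Proof.
move=> hb4 hA.
have hnb : nblocks t = nblocks s.
  have := hA (oneF n); rewrite !autocorr1 !natz; lia.
have hPp := Pp_eq hA.
have ev := nblocks_even s.
have hs := size_cl s; have ht := size_cl t; rewrite hnb in ht.
case E: (cl s) hs => [|c1 [|c2 [|c3 [|c4 [|c5 l]]]]] /= hs; rewrite -hs in ht ev hb4 => //.
- case E': (cl t) ht => [|] // _.
  by apply: (orb_shift (d := 0)); rewrite E E'.
- case E': (cl t) ht => [|d1 [|d2 []]] // _.
  have [so al] := cl_facts E; move: so al => /= /andP [hc12 _] /and3P [hc1 hc2 _].
  have [so' al'] := cl_facts E'; move: so' al' => /= /andP [hd12 _] /and3P [hd1 hd2 _].
  have e1 := Pp2 E; have e2 := Pp2 E'.
  have pp : pprod [:: (d2 - d1)%N; (N - d2 + d1)%N] = pprod [:: (c2 - c1)%N; (N - c2 + c1)%N].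
    rewrite -e1 -e2 hPp.
    have -> : (d2 - d1 + (N - d2 + d1))%N = (c2 - c1 + (N - c2 + c1))%N by lia.
    by [].
  have hp : perm_eq [:: (d2 - d1)%N; (N - d2 + d1)%N] [:: (c2 - c1)%N; (N - c2 + c1)%N].
    apply: (pprod_uniq (k := 4) _ _ _ pp) => //=; apply/and3P; split => //; lia.
  case/perm2: hp => [[e e']|[e e']].
  + apply: (orb_shift (d := inZp (d1 + N - c1))); rewrite E E' /=.
    rewrite (inZp_addE (a := c1) (b := d1)); last lia.
    rewrite (inZp_addE (a := c2) (b := d2)); last lia.
    by [].
  + apply: (orb_shift (d := inZp (d1 + N - c2))); rewrite E E' /=.
    rewrite (inZp_addE (a := c1) (b := d2)); last lia.
    rewrite (inZp_addE (a := c2) (b := d1)); last lia.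
    have -> : [:: inZp d2; inZp d1] = rot 1 [:: inZp d1; inZp d2 : F] by [].
    by rewrite perm_rot.
- case E': (cl t) ht => [|d1 [|d2 [|d3 [|d4 []]]]] // _.
  have [so al] := cl_facts E.
  move: so al => /= /and4P [hc12 hc23 hc34 _] /and5P [hc1 hc2 hc3 hc4 _].
  have [so' al'] := cl_facts E'.
  move: so' al' => /= /and4P [hd12 hd23 hd34 _] /and5P [hd1 hd2 hd3 hd4 _].
  have e1 := Pp4 E; have e2 := Pp4 E'.
  have s1 := sum4 E; have s2 := sum4 E'.
  have [g1 eg1] : exists g, (c2 - c1)%N = g by eexists.
  have [g2 eg2] : exists g, (c3 - c2)%N = g by eexists.
  have [g3 eg3] : exists g, (c4 - c3)%N = g by eexists.
  have [g4 eg4] : exists g, (N - c4 + c1)%N = g by eexists.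
  have [h1 eh1] : exists g, (d2 - d1)%N = g by eexists.
  have [h2 eh2] : exists g, (d3 - d2)%N = g by eexists.
  have [h3 eh3] : exists g, (d4 - d3)%N = g by eexists.
  have [h4 eh4] : exists g, (N - d4 + d1)%N = g by eexists.
  rewrite eg1 eg2 eg3 eg4 in e1 s1; rewrite eh1 eh2 eh3 eh4 in e2 s2.
  have [lg1 lg2 lg3 lg4] : [/\ c2 = c1 + g1, c3 = c2 + g2, c4 = c3 + g3 & N + c1 = c4 + g4]%N.
    by split; lia.
  have [lh1 lh2 lh3 lh4] : [/\ d2 = d1 + h1, d3 = d2 + h2, d4 = d3 + h3 & N + d1 = d4 + h4]%N.
    by split; lia.
  clear eg1 eg2 eg3 eg4 eh1 eh2 eh3 eh4.
  have hsq : (\sum_l pm (t l)) ^+ 2 = (\sum_l pm (s l)) ^+ 2.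
    by rewrite -!sum_autocorr; apply: eq_bigr => f _; exact: hA.
  have pm2' : forall b, pm b ^+ 2 = 1 by move=> b; rewrite expr2 pm2.
  rewrite s1 s2 !exprMn !pm2' !mul1r in hsq.
  have hpair : (h1 + h3 = g1 + g3 \/ h1 + h3 = g2 + g4)%N.
    by move/eqP: hsq; rewrite eqf_sqr => /orP [/eqP hx|/eqP hx]; lia.
  have hsum : (h1 + h2 + h3 + h4 = g1 + g2 + g3 + g4)%N by lia.
  have pp : pprod [:: h1; h2; h3; h4] = pprod [:: g1; g2; g3; g4].
    rewrite -e1 -e2 hPp hsum.
    case: hpair => hq.
      have -> : (h1 + h3 = g1 + g3)%N by lia.
      have -> : (h2 + h4 = g2 + g4)%N by lia.
      by [].
    have -> : (h1 + h3 = g2 + g4)%N by lia.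
    have -> : (h2 + h4 = g1 + g3)%N by lia.
    ring.
  have hp : perm_eq [:: h1; h2; h3; h4] [:: g1; g2; g3; g4].
    apply: (pprod_uniq (k := 8) _ _ _ pp) => //=; apply/and5P; split => //; lia.
  case: (dihedral4 hp hpair hsum) => [|[|[|[|[|[|[|]]]]]]] [? [? [? ?]]].
  + apply: (orb_shift (d := inZp (d1 + N - c1))); rewrite E E' /=.
    rewrite (inZp_addE (a := c1) (b := d1)); last lia.
    rewrite (inZp_addE (a := c2) (b := d2)); last lia.
    rewrite (inZp_addE (a := c3) (b := d3)); last lia.
    rewrite (inZp_addE (a := c4) (b := d4)); last lia.
    have -> : [:: inZp d1; inZp d2; inZp d3; inZp d4] = rot 0 [:: inZp d1; inZp d2; inZp d3; inZp d4 : F] by [].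
    by rewrite perm_rot.
  + apply: (orb_shift (d := inZp (d1 + N - c2))); rewrite E E' /=.
    rewrite (inZp_addE (a := c1) (b := d4)); last lia.
    rewrite (inZp_addE (a := c2) (b := d1)); last lia.
    rewrite (inZp_addE (a := c3) (b := d2)); last lia.
    rewrite (inZp_addE (a := c4) (b := d3)); last lia.
    have -> : [:: inZp d4; inZp d1; inZp d2; inZp d3] = rot 3 [:: inZp d1; inZp d2; inZp d3; inZp d4 : F] by [].
    by rewrite perm_rot.
  + apply: (orb_shift (d := inZp (d1 + N - c3))); rewrite E E' /=.
    rewrite (inZp_addE (a := c1) (b := d3)); last lia.
    rewrite (inZp_addE (a := c2) (b := d4)); last lia.
    rewrite (inZp_addE (a := c3) (b := d1)); last lia.
    rewrite (inZp_addE (a := c4) (b := d2)); last lia.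
    have -> : [:: inZp d3; inZp d4; inZp d1; inZp d2] = rot 2 [:: inZp d1; inZp d2; inZp d3; inZp d4 : F] by [].
    by rewrite perm_rot.
  + apply: (orb_shift (d := inZp (d1 + N - c4))); rewrite E E' /=.
    rewrite (inZp_addE (a := c1) (b := d2)); last lia.
    rewrite (inZp_addE (a := c2) (b := d3)); last lia.
    rewrite (inZp_addE (a := c3) (b := d4)); last lia.
    rewrite (inZp_addE (a := c4) (b := d1)); last lia.
    have -> : [:: inZp d2; inZp d3; inZp d4; inZp d1] = rot 1 [:: inZp d1; inZp d2; inZp d3; inZp d4 : F] by [].
    by rewrite perm_rot.
  + apply: (orb_refl (d := inZp (d1 + c4))); rewrite E E' /=.
    rewrite (inZp_subE (a := c1) (b := d4)) //; last lia.
    rewrite (inZp_subE (a := c2) (b := d3)) //; last lia.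
    rewrite (inZp_subE (a := c3) (b := d2)) //; last lia.
    rewrite (inZp_subE (a := c4) (b := d1)) //; last lia.
    have -> : [:: inZp d4; inZp d3; inZp d2; inZp d1] = rot 0 (rev [:: inZp d1; inZp d2; inZp d3; inZp d4 : F]) by [].
    by rewrite perm_rot perm_rev.
  + apply: (orb_refl (d := inZp (d1 + c3))); rewrite E E' /=.
    rewrite (inZp_subE (a := c1) (b := d3)) //; last lia.
    rewrite (inZp_subE (a := c2) (b := d2)) //; last lia.
    rewrite (inZp_subE (a := c3) (b := d1)) //; last lia.
    rewrite (inZp_subE (a := c4) (b := d4)) //; last lia.
    have -> : [:: inZp d3; inZp d2; inZp d1; inZp d4] = rot 1 (rev [:: inZp d1; inZp d2; inZp d3; inZp d4 : F]) by [].
    by rewrite perm_rot perm_rev.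
  + apply: (orb_refl (d := inZp (d1 + c2))); rewrite E E' /=.
    rewrite (inZp_subE (a := c1) (b := d2)) //; last lia.
    rewrite (inZp_subE (a := c2) (b := d1)) //; last lia.
    rewrite (inZp_subE (a := c3) (b := d4)) //; last lia.
    rewrite (inZp_subE (a := c4) (b := d3)) //; last lia.
    have -> : [:: inZp d2; inZp d1; inZp d4; inZp d3] = rot 2 (rev [:: inZp d1; inZp d2; inZp d3; inZp d4 : F]) by [].
    by rewrite perm_rot perm_rev.
  + apply: (orb_refl (d := inZp (d1 + c1))); rewrite E E' /=.
    rewrite (inZp_subE (a := c1) (b := d1)) //; last lia.
    rewrite (inZp_subE (a := c2) (b := d4)) //; last lia.
    rewrite (inZp_subE (a := c3) (b := d3)) //; last lia.
    rewrite (inZp_subE (a := c4) (b := d2)) //; last lia.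
    have -> : [:: inZp d1; inZp d4; inZp d3; inZp d2] = rot 3 (rev [:: inZp d1; inZp d2; inZp d3; inZp d4 : F]) by [].
    by rewrite perm_rot perm_rev.
Qed.
End S.


Theorem mainTheorem11 (n : nat) (sg : {ffun 'I_n.+1 -> bool}) :
  (nblocks sg <= 4)%N -> Dstab sg = Dsym sg.
Proof.
move=> h4; rewrite /Dstab /Dsym; apply: eq_card => t.
rewrite inE; apply/forallP/imsetP => [h|[p _ ->] f].
  have [p ->] := key h4 (fun f => eqP (h f)).
  by exists p.
by rewrite autocorr_Phi.
Qed.
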